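(* For any finite alphabet $\mathfrak{G}$ and any $\mathfrak{G}$-tree $\mathfrak{t}$, the map $\mathbf{V}^\star$ satisfies $\mathbf{V}^\star(\mathfrak{t}) = \sum_{u\in\mathcal{N}^{\mathrm{qm}}(\mathfrak{t})} \mathfrak{t}\downarrow u$.
   Context: $\mathfrak{G}$ is a finite alphabet (letters with arities $\geq 1$). A $\mathfrak{G}$-tree is either the leaf (the tree with no internal node) or $\mathtt{a}[\mathfrak{s}_1,\dots,\mathfrak{s}_{|\mathtt{a}|}]$, a root decorated by $\mathtt{a}\in\mathfrak{G}$ with children $\mathfrak{s}_1,\dots,\mathfrak{s}_{|\mathtt{a}|}$. Nodes are addressed by words of positive integers (root $\epsilon$, $i$-th child of $u$ is $ui$). The linear map $\mathbf{V}^\star$ on formal combinations of $\mathfrak{G}$-trees is defined recursively by: $\mathbf{V}^\star$ of the leaf is $0$; $\mathbf{V}^\star(\mathtt{a}[\mathfrak{s}, \text{leaf},\dots,\text{leaf}]) = \mathfrak{s}$; and $\mathbf{V}^\star(\mathtt{a}[\mathfrak{s}_1,\dots,\mathfrak{s}_{|\mathtt{a}|}]) = \sum_{j\in[2,|\mathtt{a}|]} \mathtt{a}[\mathfrak{s}_1,\dots,\mathfrak{s}_{j-1},\mathbf{V}^\star(\mathfrak{s}_j),\mathfrak{s}_{j+1},\dots,\mathfrak{s}_{|\mathtt{a}|}]$ whenever some $\mathfrak{s}_j$ with $j\geq 2$ is not the leaf. An internal node $u$ of $\mathfrak{t}$ is quasi-maximal if its address contains no letter $1$ and all its children except possibly the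 first one are leaves; $\mathcal{N}^{\mathrm{qm}}(\mathfrak{t})$ is the set of quasi-maximal nodes. If $\mathfrak{t}$ is obtained from a tree $\mathfrak{s}$ by grafting, at its leaf $u$, the tree $\mathtt{a}[\mathfrak{s}', \text{leaf},\dots,\text{leaf}]$ (an internal node decorated by $\mathtt{a}$ whose first child is $\mathfrak{s}'$ and other children are leaves), then the contraction $\mathfrak{t}\downarrow u$ is the tree obtained by grafting $\mathfrak{s}'$ at the leaf $u$ of $\mathfrak{s}$ instead (i.e. the node $u$ is removed and replaced by its first subtree). *)

(* Defs.v *)
From mathcomp Require Import all_boot.
From Stdlib Require Import Permutation.
Set Implicit Arguments. Unset Strict Implicit. Unset Printing Implicit Defensive.

Inductive tree (G : Type) : Type :=
| Leaf : tree G
| Node : G -> seq (tree G) -> tree G.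
Arguments Leaf {G}.

Fixpoint wf (G : Type) (ar : G -> nat) (t : tree G) : bool :=
  match t with
  | Leaf => true
  | Node a cs => (size cs == ar a) && all (wf ar) cs
  end.

Definition isLeaf (G : Type) (t : tree G) : bool :=
  if t is Leaf then true else false.

(* Formal N-linear combinations of trees are represented by lists of trees
   (the list [t1; ...; tn] stands for t1 + ... + tn); two combinations are
   equal iff the lists are permutations of each other. *)

Fixpoint Vstar (G : Type) (t : tree G) : seq (tree G) :=
  match t with
  | Leaf => [::]
  | Node a cs =>
      match cs with
      | [::] => [::]
      | s1 :: rest =>
          if all (@isLeaf G) rest then [:: s1]
          else
            (* all the ways of replacing exactly one s_j (j >= 2) by a
               term of V^star(s_j), expanded linearly *)
            let fix go (l : seq (tree G)) : seq (seq (tree G)) :=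
                match l with
                | [::] => [::]
                | x :: l' => map (fun v => v :: l') (Vstar x)
                             ++ map (fun l'' => x :: l'') (go l')
                end in
            map (fun l => Node a (s1 :: l)) (go rest)
      end
  end.

(* Addresses: words of positive integers; root = [::], i-th child of u is
   rcons u i (children are numbered from 1). *)
Fixpoint subtree (G : Type) (t : tree G) (u : seq nat) : option (tree G) :=
  match u with
  | [::] => Some t
  | i :: u' =>
      match t with
      | Leaf => None
      | Node _ cs => if (0 < i) && (i <= size cs)
                     then subtree (nth Leaf cs i.-1) u' else None
      end
  end.

Fixpoint nodes (G : Type) (t : tree G) : seq (seq nat) :=
  match t with
  | Leaf => [::]
  | Node _ cs =>
      let fix go (k : nat) (l : seq (tree G)) : seq (seq nat) :=
          match l with
          | [::] => [::]
          | c :: l' => map (cons k) (nodes c) ++ go k.+1 l'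
          end in
      [::] :: go 1 cs
  end.

Definition quasi_maximal (G : Type) (t : tree G) (u : seq nat) : bool :=
  (1 \notin u) &&
  match subtree t u with
  | Some (Node _ cs) => all (@isLeaf G) (behead cs)
  | _ => false
  end.

Definition N_qm (G : Type) (t : tree G) : seq (seq nat) :=
  filter (quasi_maximal t) (nodes t).

Fixpoint modify_at (G : Type) (f : tree G -> tree G) (t : tree G) (u : seq nat)
  : tree G :=
  match u with
  | [::] => f t
  | i :: u' =>
      match t with
      | Leaf => Leaf
      | Node a cs =>
          Node a (mkseq (fun k => if k == i.-1 then modify_at f (nth Leaf cs k) u'
                                  else nth Leaf cs k) (size cs))
      end
  end.

Definition contract (G : Type) (t : tree G) (u : seq nat) : tree G :=
  modify_at (fun s => match s with
                      | Node _ (s' :: _) => s'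
                      | _ => s
                      end) t u.

(* Main.v *)
Require Import Defs.
From mathcomp Require Import all_boot.
From Stdlib Require Import Permutation.
From Stdlib Require List.
Set Implicit Arguments. Unset Strict Implicit. Unset Printing Implicit Defensive.

Section S.
Variable G : Type.

Definition tree_ind' (P : tree G -> Prop) (HL : P Leaf)
  (HN : forall a cs, List.Forall P cs -> P (Node a cs)) : forall t, P t :=
  fix F t := match t with
  | Leaf => HL
  | Node a cs => HN a cs ((fix g l := match l return List.Forall P l with
        | [::] => List.Forall_nil _
        | c :: l' => List.Forall_cons c (F c) (g l') end) cs)
  end.

Fixpoint vgo (l : seq (tree G)) : seq (seq (tree G)) :=
  match l with
  | [::] => [::]
  | x :: l' => map (fun v => v :: l') (Vstar x) ++ map (fun l'' => x :: l'') (vgo l')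
  end.

Fixpoint ngo (k : nat) (l : seq (tree G)) : seq (seq nat) :=
  match l with
  | [::] => [::]
  | c :: l' => map (cons k) (nodes c) ++ ngo k.+1 l'
  end.

Lemma nodesE a cs : nodes (Node a cs) = [::] :: ngo 1 cs.
Proof. by []. Qed.

Lemma VstarE a s1 rest : Vstar (Node a (s1 :: rest)) =
  if all (@isLeaf G) rest then [:: s1] else map (fun l => Node a (s1 :: l)) (vgo rest).
Proof. by []. Qed.

Lemma catE (T : Type) (s1 s2 : seq T) : s1 ++ s2 = List.app s1 s2.
Proof. by elim: s1 => //= x s1 ->. Qed.

Lemma mapE (T U : Type) (f : T -> U) s : seq.map f s = List.map f s.
Proof. by elim: s => //= x s ->. Qed.

Lemma perm_cat (T : Type) (a b c d : seq T) :
  Permutation a b -> Permutation c d -> Permutation (a ++ c) (b ++ d).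
Proof. rewrite !catE; exact: Permutation_app. Qed.

Lemma perm_map (T U : Type) (f : T -> U) a b :
  Permutation a b -> Permutation (seq.map f a) (seq.map f b).
Proof. rewrite !mapE; exact: Permutation_map. Qed.

Lemma ngo_leaves k l : all (@isLeaf G) l -> ngo k l = [::].
Proof. by elim: l k => //= [[|? ?]] //= l IH k /IH ->. Qed.

Lemma qm_cons (a : G) pre x l u : 0 < size pre ->
  quasi_maximal (Node a (pre ++ x :: l)) ((size pre).+1 :: u) = quasi_maximal x u.
Proof.
move=> hp; rewrite /quasi_maximal /= in_cons.
have -> : (1 == (size pre).+1) = false by case: (size pre) hp.
rewrite size_cat /= addnS ltnS leq_addr nth_cat ltnn subnn /=.
by [].
Qed.

Lemma qm_one (t : tree G) u : quasi_maximal t (1 :: u) = false.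
Proof. by rewrite /quasi_maximal in_cons eqxx. Qed.

Lemma mkseq_set pre (x y : tree G) l :
  mkseq (fun j => if j == size pre then y else nth Leaf (pre ++ x :: l) j)
        (size (pre ++ x :: l)) = pre ++ y :: l.
Proof.
apply: (@eq_from_nth _ Leaf); first by rewrite size_mkseq !size_cat.
move=> i; rewrite size_mkseq => hi; rewrite nth_mkseq //.
case: eqP => [->|ne]; first by rewrite nth_cat ltnn subnn.
rewrite !nth_cat; case: ltnP => // h.
have : i - size pre != 0 by rewrite subn_eq0 -ltnNge ltn_neqAle eq_sym; apply/andP; split => //; apply/eqP.
by case: (i - size pre).
Qed.

Lemma contract_cons (a : G) pre (x : tree G) l u :
  contract (Node a (pre ++ x :: l)) ((size pre).+1 :: u) = Node a (pre ++ contract x u :: l).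
Proof.
rewrite /contract /=.
have := mkseq_set pre x (modify_at (fun s => match s with
                      | Node _ (s' :: _) => s'
                      | _ => s
                      end) x u) l.
move=> <-.
congr Node; apply: eq_mkseq => j; case: eqP => // ->.
by rewrite nth_cat ltnn subnn.
Qed.


Variable ar : G -> nat.
Definition Pm (c : tree G) := wf ar c -> Permutation (Vstar c) (map (contract c) (N_qm c)).

Lemma suffix (a : G) l : List.Forall Pm l -> all (wf ar) l -> forall pre, 0 < size pre ->
  Permutation (map (fun l' => Node a (pre ++ l')) (vgo l))
    (map (contract (Node a (pre ++ l)))
       (filter (quasi_maximal (Node a (pre ++ l))) (ngo (size pre).+1 l))).
Proof.
elim: l => [|x l IH] //= HF /andP[wx wl] pre hp.
inversion HF as [|? ? Px Pl]; subst.
rewrite !map_cat filter_cat map_cat; apply: perm_cat.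
  rewrite filter_map map_comp -!map_comp.
  rewrite (eq_filter (a2 := quasi_maximal x)); last by move=> u /=; rewrite qm_cons.
  rewrite (eq_map (g := fun u => Node a (pre ++ contract x u :: l))); last by move=> u /=; rewrite contract_cons.
  have -> : forall s, map (fun u => Node a (pre ++ contract x u :: l)) s =
     map (fun v => Node a (pre ++ v :: l)) (map (contract x) s) by move=> s; rewrite -map_comp.
  exact: perm_map (Px wx).
have e : pre ++ x :: l = rcons pre x ++ l by rewrite cat_rcons.
rewrite e -map_comp.
have -> : (size pre).+2 = (size (rcons pre x)).+1 by rewrite size_rcons.
rewrite (eq_map (g := fun l'' => Node a (rcons pre x ++ l''))); last by move=> y /=; rewrite cat_rcons.
by apply: IH => //; rewrite size_rcons.
Qed.

End S.

Theorem proposition2p4 (G : finType) (ar : G -> nat)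
  (ar_pos : forall a : G, 0 < ar a) (t : tree G) :
  wf ar t ->
  Permutation (Vstar t) (map (contract t) (N_qm t)).
Proof.
move: t; apply: tree_ind' => [|a cs HF]; first by [].
case: cs HF => [|s1 rest] HF /andP[hs].
  by move: (ar_pos a); rewrite -(eqP hs).
move=> /andP[w1 wr].
inversion HF as [|? ? P1 Pr]; subst.
rewrite VstarE /N_qm nodesE /= filter_cat filter_map.
rewrite (eq_filter (a2 := pred0)); last by move=> u /=; rewrite qm_one.
rewrite filter_pred0 /=.
case: ifP => hl.
  rewrite ngo_leaves // /quasi_maximal /= hl /=.
  by [].
rewrite /quasi_maximal /= hl /= -/(quasi_maximal _).
exact: (@suffix G ar a rest Pr wr [:: s1]).
Qed.
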